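(* Let $i,j\geq 1$ be integers. For $n\geq 0$, let $U(i,j,n)$ be the set of all triples $(L_1,L_2,L_3)$ of walks of length $n$ with steps $(1,1)$ and $(1,-1)$, where $L_1$ starts at $(0,0)$, $L_2$ starts at $(0,2i)$ and $L_3$ starts at $(0,2i+2j)$. Let $V(i,j,n)$ be the set of triples in $U(i,j,n)$ whose three walks are pairwise nonintersecting, and for $\{a,b\}\in\{\{1,2\},\{2,3\},\{1,3\}\}$ let $M_{ab}(n)$ be the set of triples in $U(i,j,n)$ such that $L_a$ intersects $L_b$. Define $V_{i,j}(t)=\sum_{n\geq 0}|V(i,j,n)|t^n$, $U_{i,j}(t)=\sum_{n\geq 0}|U(i,j,n)|t^n$ and $M_{ab}(t)=\sum_{n\geq0}|M_{ab}(n)|t^n$. Then $$V_{i,j}(t)=U_{i,j}(t)+M_{13}(t)-M_{12}(t)-M_{23}(t).$$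
   Context: Two walks intersect if they share a common lattice point; otherwise they are nonintersecting. *)

(* Defs.v *)
From mathcomp Require Import all_boot all_order all_algebra.
Set Implicit Arguments. Unset Strict Implicit. Unset Printing Implicit Defensive.
Import GRing.Theory Num.Theory.
Local Open Scope ring_scope.

(* A walk of length n with steps (1,1) (true) and (1,-1) (false),
   encoded by its sequence of n steps. *)
Definition walk (n : nat) := n.-tuple bool.

Definition step (b : bool) : int := if b then 1 else -1.

Definition height (y0 : int) (w : seq bool) (k : nat) : int :=
  y0 + \sum_(s <- take k w) step s.

Definition lattice_points (n : nat) (y0 : int) (w : walk n) : seq (nat * int) :=
  [seq (k, height y0 w k) | k <- iota 0 n.+1].

Definition intersect (n : nat) (y1 y2 : int) (w1 w2 : walk n) : bool :=
  has (fun p => p \in lattice_points y2 w2) (lattice_points y1 w1).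

Definition triple (n : nat) := (walk n * walk n * walk n)%type.

Section Sets.
Variables (i j n : nat).
Definition y1 : int := 0.
Definition y2 : int := (2 * i)%:Z.
Definition y3 : int := (2 * i + 2 * j)%:Z.

Definition L1 (L : triple n) : walk n := L.1.1.
Definition L2 (L : triple n) : walk n := L.1.2.
Definition L3 (L : triple n) : walk n := L.2.

Definition Uset : {set triple n} := [set: triple n].
Definition Vset : {set triple n} :=
  [set L | [&& ~~ intersect y1 y2 (L1 L) (L2 L),
              ~~ intersect y2 y3 (L2 L) (L3 L) &
              ~~ intersect y1 y3 (L1 L) (L3 L)]].
Definition M12 : {set triple n} := [set L | intersect y1 y2 (L1 L) (L2 L)].
Definition M23 : {set triple n} := [set L | intersect y2 y3 (L2 L) (L3 L)].
Definition M13 : {set triple n} := [set L | intersect y1 y3 (L1 L) (L3 L)].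
End Sets.

(* Main.v *)
Require Import Defs.
From mathcomp Require Import all_boot all_order all_algebra.
From mathcomp Require Import zify.
Set Implicit Arguments. Unset Strict Implicit. Unset Printing Implicit Defensive.
Import Order.TTheory GRing.Theory Num.Theory.
Local Open Scope ring_scope.

Lemma height0 y (w : seq bool) : height y w 0 = y.
Proof. by rewrite /height take0 big_nil addr0. Qed.

Lemma heightS y (w : seq bool) k : (k < size w)%N ->
  height y w k.+1 = height y w k + step (nth false w k).
Proof.
move=> hk; rewrite /height (take_nth false hk) -cats1 big_cat big_seq1 /=.
by rewrite addrA.
Qed.

Lemma step_pm b : step b = 1 \/ step b = -1.
Proof. by case: b; [left|right]. Qed.

Section Core.
Variable n : nat.
Implicit Types u v w : walk n.

Definition splice (s : nat) u v : walk n :=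
  [tuple (if (i < s)%N then tnth u i else tnth v i) | i < n].

Lemma nth_splice s u v k : (k < n)%N ->
  nth false (splice s u v) k = if (k < s)%N then nth false u k else nth false v k.
Proof.
move=> hk.
have -> : nth false (splice s u v) k = tnth (splice s u v) (Ordinal hk)
  by rewrite (tnth_nth false).
by rewrite tnth_mktuple /= !(tnth_nth false).
Qed.

Lemma splice_invol s u v : splice s (splice s u v) (splice s v u) = u.
Proof.
apply: eq_from_tnth => x; rewrite !tnth_mktuple.
by case: (x < s)%N.
Qed.

Lemma height_step y w k : (k < n)%N ->
  height y w k.+1 - height y w k = 1 \/ height y w k.+1 - height y w k = -1.
Proof.
move=> hk; rewrite heightS ?size_tuple // addrAC subrr add0r; exact: step_pm.
Qed.

Lemma sep y y' u v (hyy : exists m : int, y' - y = 2 * m /\ 0 < m) k :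
  (k <= n)%N -> (forall k', (k' <= k)%N -> height y u k' != height y' v k') ->
  height y u k < height y' v k.
Proof.
move=> hk hne.
suff : exists m : int, height y' v k - height y u k = 2 * m /\ 0 < m.
  by case=> m [h1 h2]; lia.
elim: k hk hne => [|k IH] hk hne.
  by rewrite !height0.
have [m [h1 h2]] := IH (ltnW hk) (fun k' hk' => hne k' (leqW hk')).
have := hne k.+1 (leqnn _).
have [e1|e1] := height_step y u hk; have [e2|e2] := height_step y' v hk.
- move=> _; exists m; split; [lia|done].
- move=> hn; exists (m - 1); split; lia.
- move=> hn; exists (m + 1); split; lia.
- move=> _; exists m; split; [lia|done].
Qed.

Lemma height_splice_le y s u v k : (k <= s)%N -> (k <= n)%N ->
  height y (splice s u v) k = height y u k.
Proof.
elim: k => [|k IH] h1 h2; first by rewrite !height0.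
rewrite !heightS ?size_tuple // IH ?(ltnW h1) ?(ltnW h2) //.
by rewrite nth_splice // h1.
Qed.

Lemma height_splice_ge y y' s u v k : (s <= k)%N -> (k <= n)%N ->
  height y u s = height y' v s ->
  height y (splice s u v) k = height y' v k.
Proof.
move=> h1 h2 e.
elim: k h1 h2 => [|k IH] h1 h2.
  by move: h1; rewrite leqn0 => /eqP s0; subst s; rewrite height_splice_le.
have [es|hne] := eqVneq s k.+1.
  by rewrite height_splice_le ?es // -es e.
have hs : (s <= k)%N by rewrite -ltnS ltn_neqAle hne h1.
rewrite !heightS ?size_tuple // IH // ?(ltnW h2) //.
by rewrite nth_splice // ltnNge hs.
Qed.

Definition fm y y' u v : nat :=
  find (fun k => height y u k == height y' v k) (iota 0 n.+1).

Lemma fm_le y y' u v : (fm y y' u v <= n.+1)%N.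
Proof. by rewrite /fm -[X in (_ <= X)%N](size_iota 0) find_size. Qed.

Lemma fm_before y y' u v k : (k < fm y y' u v)%N -> height y u k != height y' v k.
Proof.
move=> hk; have := before_find 0%N hk.
rewrite nth_iota ?add0n => [->//|].
exact: leq_trans hk (fm_le _ _ _ _).
Qed.

Lemma fm_at y y' u v : (fm y y' u v <= n)%N ->
  height y u (fm y y' u v) = height y' v (fm y y' u v).
Proof.
move=> hk.
have hh : has (fun k => height y u k == height y' v k) (iota 0 n.+1).
  by rewrite has_find size_iota.
by have := nth_find 0%N hh; rewrite nth_iota ?add0n // => /eqP.
Qed.

Lemma intersectP y y' u v :
  reflect (exists2 k, (k <= n)%N & height y u k = height y' v k) (intersect y y' u v).
Proof.
apply: (iffP hasP).
  move=> [x /mapP [k hk ->] /mapP [k' hk' [e1 e2]]].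
  by exists k; [rewrite mem_iota in hk|rewrite e2 e1].
move=> [k hk e]; exists (k, height y u k).
  by apply/mapP; exists k; rewrite ?mem_iota.
by apply/mapP; exists k; rewrite ?mem_iota ?e.
Qed.

Lemma intersect_fm y y' u v : intersect y y' u v = (fm y y' u v <= n)%N.
Proof.
apply/intersectP/idP => [[k hk e]|h]; last by exists (fm y y' u v); rewrite ?fm_at.
rewrite leqNgt; apply/negP => hlt.
have : (k < fm y y' u v)%N by apply: leq_ltn_trans hlt.
by move/fm_before; rewrite e eqxx.
Qed.

Lemma fm_unique y y' u v s : (s <= n.+1)%N ->
  (forall k, (k < s)%N -> height y u k != height y' v k) ->
  ((s <= n)%N -> height y u s = height y' v s) -> fm y y' u v = s.
Proof.
move=> h1 h2 h3.
case: (ltngtP (fm y y' u v) s) => // h.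
  have hn : (fm y y' u v <= n)%N by rewrite -ltnS; exact: leq_trans h h1.
  by have := h2 _ h; rewrite fm_at // eqxx.
have hn : (s <= n)%N by rewrite -ltnS; exact: leq_trans h (fm_le _ _ _ _).
by have := fm_before h; rewrite h3 // eqxx.
Qed.

End Core.

Section Three.
Variables (n : nat) (p q r : int).
Hypothesis hpq : exists m : int, q - p = 2 * m /\ 0 < m.
Hypothesis hqr : exists m : int, r - q = 2 * m /\ 0 < m.
Variables u v w : walk n.
Let s := fm p q u v.
Let t := fm q r v w.

Lemma betw k : (k < s)%N -> (k < t)%N -> height p u k < height r w k.
Proof.
move=> hs ht.
have hk : (k <= n)%N by rewrite -ltnS; exact: leq_trans hs (fm_le _ _ _ _).
have h1 := sep hpq hk (fun k' hk' => fm_before (leq_ltn_trans hk' hs)).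
have h2 := sep hqr hk (fun k' hk' => fm_before (leq_ltn_trans hk' ht)).
exact: lt_trans h1 h2.
Qed.

Lemma no13 k : (k < s)%N -> (k <= t)%N -> height p u k != height r w k.
Proof.
move=> hs ht.
move: ht; rewrite leq_eqVlt => /orP [/eqP kt|ht]; last by rewrite lt_eqF // betw.
have hk : (t <= n)%N by rewrite -kt -ltnS; exact: leq_trans hs (fm_le _ _ _ _).
have e := fm_at hk; rewrite -/t -kt in e.
by rewrite -e; apply: fm_before.
Qed.

Lemma no13' k : (k <= s)%N -> (k < t)%N -> height p u k != height r w k.
Proof.
move=> hs ht.
move: hs; rewrite leq_eqVlt => /orP [/eqP ks|hs]; last by rewrite lt_eqF // betw.
have hk : (s <= n)%N by rewrite -ks -ltnS; exact: leq_trans ht (fm_le _ _ _ _).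
have e := fm_at hk; rewrite -/s -ks in e.
by rewrite e; apply: fm_before.
Qed.

Lemma no13_all : ~~ intersect p q u v -> ~~ intersect q r v w -> ~~ intersect p r u w.
Proof.
move=> h1 h2; apply/negP => /intersectP [k hk e].
rewrite !intersect_fm -!ltnNge in h1 h2.
by have := no13 (leq_ltn_trans hk h1) (ltnW (leq_ltn_trans hk h2)); rewrite e eqxx.
Qed.

Lemma st_neq : intersect p q u v -> intersect q r v w -> ~~ intersect p r u w -> s != t.
Proof.
move=> h1 h2 /intersectP h3; apply/eqP => est.
rewrite !intersect_fm in h1 h2.
apply: h3; exists s => //.
by rewrite (fm_at h1) -/s est (fm_at h2).
Qed.

Lemma case12 : (s < t)%N ->
  [/\ fm p q (splice s u v) (splice s v u) = s,
      (s < fm q r (splice s v u) w)%N,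
      intersect q r (splice s v u) w = intersect p r u w &
      intersect p r (splice s u v) w = intersect q r v w].
Proof.
move=> hst.
have hsn : (s <= n)%N by rewrite -ltnS; exact: leq_trans hst (fm_le _ _ _ _).
have es := fm_at hsn; rewrite -/s in es.
have Hu1 k : (k <= s)%N -> (k <= n)%N -> height p (splice s u v) k = height p u k.
  by move=> *; rewrite height_splice_le.
have Hv1 k : (k <= s)%N -> (k <= n)%N -> height q (splice s v u) k = height q v k.
  by move=> *; rewrite height_splice_le.
have Hu2 k : (s <= k)%N -> (k <= n)%N -> height p (splice s u v) k = height q v k.
  by move=> *; rewrite (height_splice_ge (y' := q)).
have Hv2 k : (s <= k)%N -> (k <= n)%N -> height q (splice s v u) k = height p u k.
  by move=> *; rewrite (height_splice_ge (y' := p)).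
split.
- apply: fm_unique => [|k hk|_].
  + by apply: leq_trans hsn _.
  + rewrite Hu1 ?Hv1 ?(ltnW hk) ?(ltnW (leq_trans hk hsn)) //; exact: fm_before.
  + by rewrite Hu1 ?Hv1.
- rewrite ltnNge; apply/negP => hle.
  have hn : (fm q r (splice s v u) w <= n)%N := leq_trans hle hsn.
  have := fm_at hn; rewrite Hv1 // => e.
  by have := fm_before (leq_ltn_trans hle hst); rewrite e eqxx.
- apply/intersectP/intersectP => [[k hk e]|[k hk e]].
  + case: (leqP k s) => hks.
    * rewrite Hv1 // in e.
      by have := fm_before (leq_ltn_trans hks hst); rewrite e eqxx.
    * by exists k; rewrite // -Hv2 // ltnW.
  + case: (leqP k s) => hks.
    * by have := no13' hks (leq_ltn_trans hks hst); rewrite e eqxx.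
    * by exists k; rewrite // Hv2 // ltnW.
- apply/intersectP/intersectP => [[k hk e]|[k hk e]].
  + case: (leqP k s) => hks.
    * rewrite Hu1 // in e.
      by have := no13' hks (leq_ltn_trans hks hst); rewrite e eqxx.
    * by exists k; rewrite // -Hu2 // ltnW.
  + have htk : (t <= k)%N.
      by rewrite leqNgt; apply/negP => /fm_before; rewrite e eqxx.
    by exists k; rewrite // Hu2 // ltnW // (leq_trans hst htk).
Qed.

Lemma case23 : (t < s)%N ->
  [/\ fm q r (splice t v w) (splice t w v) = t,
      (t < fm p q u (splice t v w))%N,
      intersect p q u (splice t v w) = intersect p r u w &
      intersect p r u (splice t w v) = intersect p q u v].
Proof.
move=> hts.
have htn : (t <= n)%N by rewrite -ltnS; exact: leq_trans hts (fm_le _ _ _ _).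
have et := fm_at htn; rewrite -/t in et.
have Hv1 k : (k <= t)%N -> (k <= n)%N -> height q (splice t v w) k = height q v k.
  by move=> *; rewrite height_splice_le.
have Hw1 k : (k <= t)%N -> (k <= n)%N -> height r (splice t w v) k = height r w k.
  by move=> *; rewrite height_splice_le.
have Hv2 k : (t <= k)%N -> (k <= n)%N -> height q (splice t v w) k = height r w k.
  by move=> *; rewrite (height_splice_ge (y' := r)).
have Hw2 k : (t <= k)%N -> (k <= n)%N -> height r (splice t w v) k = height q v k.
  by move=> *; rewrite (height_splice_ge (y' := q)).
split.
- apply: fm_unique => [|k hk|_].
  + by apply: leq_trans htn _.
  + rewrite Hv1 ?Hw1 ?(ltnW hk) ?(ltnW (leq_trans hk htn)) //; exact: fm_before.
  + by rewrite Hv1 ?Hw1.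
- rewrite ltnNge; apply/negP => hle.
  have hn : (fm p q u (splice t v w) <= n)%N := leq_trans hle htn.
  have := fm_at hn; rewrite Hv1 // => e.
  by have := fm_before (leq_ltn_trans hle hts); rewrite e eqxx.
- apply/intersectP/intersectP => [[k hk e]|[k hk e]].
  + case: (leqP k t) => hkt.
    * rewrite Hv1 // in e.
      by have := fm_before (leq_ltn_trans hkt hts); rewrite e eqxx.
    * by exists k; rewrite // -Hv2 // ltnW.
  + case: (leqP k t) => hkt.
    * by have := no13 (leq_ltn_trans hkt hts) hkt; rewrite e eqxx.
    * by exists k; rewrite // Hv2 // ltnW.
- apply/intersectP/intersectP => [[k hk e]|[k hk e]].
  + case: (leqP k t) => hkt.
    * rewrite Hw1 // in e.
      by have := no13 (leq_ltn_trans hkt hts) hkt; rewrite e eqxx.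
    * by exists k; rewrite // -Hw2 // ltnW.
  + have hsk : (s <= k)%N.
      by rewrite leqNgt; apply/negP => /fm_before; rewrite e eqxx.
    by exists k; rewrite // Hw2 // ltnW // (leq_trans hts hsk).
Qed.

End Three.

Section Main.
Variables (i j n : nat).
Hypotheses (hi : (1 <= i)%N) (hj : (1 <= j)%N).

Definition Phi (L : triple n) : triple n :=
  let a := L1 L in let b := L2 L in let c := L3 L in
  let s := fm y1 (y2 i) a b in let t := fm (y2 i) (y3 i j) b c in
  if (s < t)%N then (splice s a b, splice s b a, c)
  else if (t < s)%N then (a, splice t b c, splice t c b) else L.

Let hpq : exists m : int, y2 i - y1 = 2 * m /\ 0 < m.
Proof. exists i%:Z; rewrite /y1 /y2; split; lia. Qed.
Let hqr : exists m : int, y3 i j - y2 i = 2 * m /\ 0 < m.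
Proof. exists j%:Z; rewrite /y3 /y2; split; lia. Qed.

Let m12 (L : triple n) := intersect y1 (y2 i) (L1 L) (L2 L).
Let m23 (L : triple n) := intersect (y2 i) (y3 i j) (L2 L) (L3 L).
Let m13 (L : triple n) := intersect y1 (y3 i j) (L1 L) (L3 L).

Lemma Phi12 (L : triple n) :
  (fm y1 (y2 i) (L1 L) (L2 L) < fm (y2 i) (y3 i j) (L2 L) (L3 L))%N ->
  [/\ Phi (Phi L) = L, m12 (Phi L), m23 (Phi L) = m13 L & m13 (Phi L) = m23 L].
Proof.
case: L => [[a b] c]; rewrite /m12 /m23 /m13 /L1 /L2 /L3 /= => hst.
have [e1 e2 e3 e4] := case12 hpq hqr hst.
have hsn : (fm y1 (y2 i) a b <= n)%N by rewrite -ltnS; exact: leq_trans hst (fm_le _ _ _ _).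
rewrite /Phi /L1 /L2 /L3 /= hst /= e1 e2 e3 e4 intersect_fm e1 hsn.
by rewrite !splice_invol.
Qed.

Lemma Phi23 (L : triple n) :
  (fm (y2 i) (y3 i j) (L2 L) (L3 L) < fm y1 (y2 i) (L1 L) (L2 L))%N ->
  [/\ Phi (Phi L) = L, m23 (Phi L), m12 (Phi L) = m13 L & m13 (Phi L) = m12 L].
Proof.
case: L => [[a b] c]; rewrite /m12 /m23 /m13 /L1 /L2 /L3 /= => hts.
have [e1 e2 e3 e4] := case23 hpq hqr hts.
have htn : (fm (y2 i) (y3 i j) b c <= n)%N by rewrite -ltnS; exact: leq_trans hts (fm_le _ _ _ _).
have hf : (fm y1 (y2 i) a b < fm (y2 i) (y3 i j) b c)%N = false by rewrite ltnNge ltnW.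
rewrite /Phi /L1 /L2 /L3 /= hf hts /= e1.
have hf2 : (fm y1 (y2 i) a (splice (fm (y2 i) (y3 i j) b c) b c) < fm (y2 i) (y3 i j) b c)%N = false.
  by rewrite ltnNge ltnW.
rewrite hf2 e2 e3 e4 intersect_fm e1 htn.
by rewrite !splice_invol.
Qed.


Let A := M13 i j n :\: (M12 i n :&: M23 i j n).
Let B := (M12 i n :&: M23 i j n) :\: M13 i j n.

Lemma fm_gt (y y' : int) (u v : walk n) : ~~ intersect y y' u v -> (n < fm y y' u v)%N.
Proof. by rewrite intersect_fm -ltnNge. Qed.

Lemma PhiA L : L \in A -> Phi L \in B /\ Phi (Phi L) = L.
Proof.
move=> hL; have /andP [h2 h1] : ~~ (m12 L && m23 L) && m13 L by move: hL; rewrite !inE.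
have h3 : m12 L || m23 L.
  apply: contraLR h1; rewrite negb_or => /andP [n12 n23].
  exact: (no13_all hpq hqr n12 n23).
have H : forall L', m12 L' && m23 L' && ~~ m13 L' -> L' \in B.
  by move=> L'; rewrite !inE -/(m12 L') -/(m23 L') -/(m13 L') andbC.
case/orP: h3 => [h12|h23].
- have n23 : ~~ m23 L by move: h2; rewrite h12.
  have hst : (fm y1 (y2 i) (L1 L) (L2 L) < fm (y2 i) (y3 i j) (L2 L) (L3 L))%N.
    by apply: leq_ltn_trans (fm_gt n23); rewrite -intersect_fm.
  have [e1 e2 e3 e4] := Phi12 hst.
  by split=> //; apply: H; rewrite e2 e3 e4 h1 n23.
- have n12 : ~~ m12 L by move: h2; rewrite h23 andbT.
  have hts : (fm (y2 i) (y3 i j) (L2 L) (L3 L) < fm y1 (y2 i) (L1 L) (L2 L))%N.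
    by apply: leq_ltn_trans (fm_gt n12); rewrite -intersect_fm.
  have [e1 e2 e3 e4] := Phi23 hts.
  by split=> //; apply: H; rewrite e2 e3 e4 h1 n12.
Qed.

Lemma PhiB L : L \in B -> Phi L \in A /\ Phi (Phi L) = L.
Proof.
move=> hL; have /andP [n13 /andP [h12 h23]] : ~~ m13 L && (m12 L && m23 L) by move: hL; rewrite !inE.
have H : forall L', m13 L' && ~~ (m12 L' && m23 L') -> L' \in A.
  by move=> L'; rewrite !inE -/(m12 L') -/(m23 L') -/(m13 L') andbC.
have hne := st_neq h12 h23 n13.
case: (ltngtP (fm y1 (y2 i) (L1 L) (L2 L)) (fm (y2 i) (y3 i j) (L2 L) (L3 L))) hne => // hc _.
- have [e1 e2 e3 e4] := Phi12 hc.
  by split=> //; apply: H; rewrite e2 e3 e4 h23 (negbTE n13).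
- have [e1 e2 e3 e4] := Phi23 hc.
  by split=> //; apply: H; rewrite e2 e3 e4 h12 (negbTE n13).
Qed.

Lemma cardAB : #|A| = #|B|.
Proof.
apply/eqP; rewrite eqn_leq; apply/andP; split.
- rewrite -(card_in_imset (f := Phi)); last first.
    by move=> x y hx hy e; rewrite -(PhiA hx).2 -(PhiA hy).2 e.
  apply: subset_leq_card; apply/subsetP => z /imsetP [x hx ->].
  exact: (PhiA hx).1.
- rewrite -(card_in_imset (f := Phi)); last first.
    by move=> x y hx hy e; rewrite -(PhiB hx).2 -(PhiB hy).2 e.
  apply: subset_leq_card; apply/subsetP => z /imsetP [x hx ->].
  exact: (PhiB hx).1.
Qed.

Lemma card_M13 : #|M13 i j n| = #|M12 i n :&: M23 i j n|.
Proof.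
rewrite -(cardsID (M12 i n :&: M23 i j n) (M13 i j n)).
rewrite -(cardsID (M13 i j n) (M12 i n :&: M23 i j n)).
by rewrite -/A -/B cardAB setIC.
Qed.

Lemma Vset_eq : Vset i j n = ~: (M12 i n :|: M23 i j n).
Proof.
apply/setP => L; rewrite !inE -/(m12 L) -/(m23 L) -/(m13 L) negb_or.
case h12: (m12 L); case h23: (m23 L) => //=.
have := no13_all hpq hqr (negbT h12) (negbT h23).
by [].
Qed.

Lemma main_nat : (#|Vset i j n| + #|M12 i n| + #|M23 i j n| = #|Uset n| + #|M13 i j n|)%N.
Proof.
have e1 := cardsC (M12 i n :|: M23 i j n).
have e2 := cardsUI (M12 i n) (M23 i j n).
rewrite Vset_eq card_M13 /Uset cardsT -e1.
lia.
Qed.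

End Main.

Theorem proposition3p1 (i j : nat) (hi : (1 <= i)%N) (hj : (1 <= j)%N) :
  forall n : nat,
    (#|Vset i j n|)%:Z =
      (#|Uset n|)%:Z + (#|M13 i j n|)%:Z - (#|M12 i n|)%:Z - (#|M23 i j n|)%:Z.
Proof.
move=> n; have := @main_nat i j n hi hj.
lia.
Qed.
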